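(* Let $K \geq 1$ and $n \ge 1$. For $k = 1, \ldots, K$ let $A_k$ and $E_k$ be real $d_k \times n$ matrices, let $r_k = \mathrm{rank}(A_k) \geq 1$, let $X_k = A_k + E_k$, and let $\tilde{A}_k = \tilde{U}_k \tilde{\Sigma}_k \tilde{V}_k^T$ be the rank-$r_k$ truncated singular value decomposition of $X_k$ (so $\tilde{U}_k$ is $d_k \times r_k$ and $\tilde{V}_k$ is $n \times r_k$ with orthonormal columns, and $\tilde{\Sigma}_k$ is the diagonal matrix of the $r_k$ largest singular values of $X_k$), and assume $\sigma_{\min}(\tilde{\Sigma}_k) > 0$. Let $\theta_k$ be the largest principal angle between $\mathrm{row}(A_k)$ and $\mathrm{row}(\tilde{A}_k)$. Let $r_J = \dim \bigcap_{k=1}^K \mathrm{row}(A_k)$, and let $M$ be the vertical concatenation $$M = \begin{bmatrix} \tilde{V}_1^T \\ \vdots \\ \tilde{V}_K^T \end{bmatrix}$$ with singular values $\sigma_{M,1} \geq \sigma_{M,2} \geq \cdots$. Then for every $i = 1, \ldots, r_J$, $$\sigma_{M,i}^2 \;\geq\; K - \sum_{k=1}^K \sin^2\theta_k \;\geq\; K - \sum_{k=1}^K \left(\frac{\max(\|E_k \tilde{V}_k\|, \|E_k^T \tilde{U}_k\|)}{\sigma_{\min}(\tilde{\Sigma}_k)}\right)^2.$$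
   Context: $\mathrm{row}(B) \subseteq \mathbb{R}^n$ denotes the row space of a matrix $B$ with $n$ columns. $\|\cdot\|$ denotes the spectral (operator $L^2$) norm, and $\sigma_{\min}(\tilde{\Sigma}_k)$ is the smallest diagonal entry of $\tilde{\Sigma}_k$. For two subspaces of equal dimension, the sine of their largest principal angle equals the spectral norm of the difference of the orthogonal projections onto them. *)

(* Defs.v *)
From HB Require Import structures.
From mathcomp Require Import all_boot all_order all_algebra.
From mathcomp Require Import boolp classical_sets reals.
Set Implicit Arguments. Unset Strict Implicit. Unset Printing Implicit Defensive.
Import Order.TTheory GRing.Theory Num.Theory.
Local Open Scope ring_scope.
Local Open Scope classical_set_scope.

Section Defs.
Variable R : realType.

Definition l2norm n (v : 'cV[R]_n) : R := Num.sqrt (\sum_i v i 0 ^+ 2).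

Definition specnorm m n (B : 'M[R]_(m, n)) : R :=
  sup [set l2norm (B *m v) | v in [set v : 'cV[R]_n | l2norm v = 1]].

Definition diagmx_of d n (s : nat -> R) : 'M[R]_(d, n) :=
  \matrix_(i < d, j < n) (if val i == val j then s (val i) else 0).

(* Full singular value decomposition X = U S V^T with U, V orthogonal and
   S diagonal with the singular values s 0 >= s 1 >= ... >= 0 on its diagonal
   (s i = 0 for i >= min(d,n), i.e. s is padded with zeros).
   s i is the (i+1)-th largest singular value. *)
Definition is_svd d n (X : 'M[R]_(d, n)) (U : 'M[R]_d) (s : nat -> R)
    (V : 'M[R]_n) : Prop :=
  [/\ U^T *m U = 1%:M, V^T *m V = 1%:M,
      X = U *m diagmx_of d n s *m V^T,
      (forall i j, (i <= j)%N -> s j <= s i) &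
      (forall i, 0 <= s i /\ ((minn d n <= i)%N -> s i = 0))].

(* first r columns of a matrix (columns with the same index). *)
Definition lcols m p (r : nat) (U : 'M[R]_(m, p)) : 'M[R]_(m, r) :=
  \matrix_(i < m, j < r) \sum_(j' : 'I_p | val j' == val j) U i j'.

Definition trunc_U d r (U : 'M[R]_d) : 'M[R]_(d, r) := lcols r U.
Definition trunc_V n r (V : 'M[R]_n) : 'M[R]_(n, r) := lcols r V.
Definition trunc_S r (s : nat -> R) : 'M[R]_r := diagmx_of r r s.
Definition trunc_A d n r (U : 'M[R]_d) (s : nat -> R) (V : 'M[R]_n)
  : 'M[R]_(d, n) := trunc_U r U *m trunc_S r s *m (trunc_V r V)^T.

Definition rowproj m n (B : 'M[R]_(m, n)) : 'M[R]_n :=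
  let Bb := row_base B in (Bb^T *m invmx (Bb *m Bb^T) *m Bb).

(* sine of the largest principal angle between row(B1) and row(B2)
   (of equal dimension): spectral norm of the difference of the projections. *)
Definition sin_max_angle m1 m2 n (B1 : 'M[R]_(m1, n)) (B2 : 'M[R]_(m2, n)) : R :=
  specnorm (rowproj B1 - rowproj B2).

Definition dim_cap_rows K n (d : 'I_K -> nat) (A : forall k, 'M[R]_(d k, n)) : nat :=
  \rank (\big[capmx/1%:M]_(k < K) (<<A k>>)%MS).

End Defs.

(* Main.v *)
Require Import Defs.
From HB Require Import structures.
From mathcomp Require Import all_boot all_order all_algebra.
From mathcomp Require Import boolp classical_sets reals.
From mathcomp Require Import ring lra zify.
Import Order.TTheory GRing.Theory Num.Theory.
Local Open Scope ring_scope.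
Set Implicit Arguments. Unset Strict Implicit. Unset Printing Implicit Defensive.


Section Aux.
Variable R : realType.

Definition dot n (u v : 'cV[R]_n) : R := (u^T *m v) 0 0.
Definition nsq n (v : 'cV[R]_n) : R := dot v v.

Lemma dotE n (u v : 'cV[R]_n) : dot u v = \sum_i u i 0 * v i 0.
Proof. by rewrite /dot mxE; apply: eq_bigr => i _; rewrite mxE. Qed.

Lemma dotC n (u v : 'cV[R]_n) : dot u v = dot v u.
Proof. by rewrite !dotE; apply: eq_bigr => i _; rewrite mulrC. Qed.

Lemma dotDl n (u w v : 'cV[R]_n) : dot (u + w) v = dot u v + dot w v.
Proof. by rewrite !dotE -big_split; apply: eq_bigr => i _; rewrite mxE mulrDl. Qed.

Lemma dotZl n a (u v : 'cV[R]_n) : dot (a *: u) v = a * dot u v.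
Proof. by rewrite !dotE mulr_sumr; apply: eq_bigr => i _; rewrite mxE mulrA. Qed.

Lemma dotNl n (u v : 'cV[R]_n) : dot (- u) v = - dot u v.
Proof. by rewrite -scaleN1r dotZl mulN1r. Qed.

Lemma dotBl n (u w v : 'cV[R]_n) : dot (u - w) v = dot u v - dot w v.
Proof. by rewrite dotDl dotNl. Qed.

Lemma dotDr n (u w v : 'cV[R]_n) : dot v (u + w) = dot v u + dot v w.
Proof. by rewrite dotC dotDl !(dotC v). Qed.
Lemma dotBr n (u w v : 'cV[R]_n) : dot v (u - w) = dot v u - dot v w.
Proof. by rewrite dotC dotBl !(dotC v). Qed.
Lemma dotZr n a (u v : 'cV[R]_n) : dot v (a *: u) = a * dot v u.
Proof. by rewrite dotC dotZl dotC. Qed.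

Lemma dot0r n (v : 'cV[R]_n) : dot v 0 = 0.
Proof. by rewrite /dot mulmx0 mxE. Qed.
Lemma dot0l n (v : 'cV[R]_n) : dot 0 v = 0.
Proof. by rewrite dotC dot0r. Qed.

Lemma dotM n m (B : 'M[R]_(m, n)) u v : dot u (B *m v) = dot (B^T *m u) v.
Proof. by rewrite /dot trmx_mul trmxK mulmxA. Qed.

Lemma nsqE n (v : 'cV[R]_n) : nsq v = \sum_i v i 0 ^+ 2.
Proof. by rewrite /nsq dotE; apply: eq_bigr => i _; rewrite expr2. Qed.

Lemma nsq_ge0 n (v : 'cV[R]_n) : 0 <= nsq v.
Proof. by rewrite nsqE; apply: sumr_ge0 => i _; apply: sqr_ge0. Qed.

Lemma nsq_eq0 n (v : 'cV[R]_n) : nsq v = 0 -> v = 0.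
Proof.
rewrite nsqE => h; apply/matrixP => i j; rewrite ord1 mxE.
have hi : v i 0 ^+ 2 = 0 := psumr_eq0P (fun i _ => sqr_ge0 (v i 0)) h (i:=i) isT.
by move/eqP: hi; rewrite sqrf_eq0 => /eqP.
Qed.

Lemma nsq0 n : nsq (0 : 'cV[R]_n) = 0.
Proof. by rewrite /nsq dot0r. Qed.

Lemma nsqZ n a (v : 'cV[R]_n) : nsq (a *: v) = a ^+ 2 * nsq v.
Proof. by rewrite /nsq dotZl dotZr mulrA expr2. Qed.

Lemma nsqD n (u v : 'cV[R]_n) : nsq (u + v) = nsq u + 2 * dot u v + nsq v.
Proof. rewrite /nsq !dotDl !dotDr (dotC v u); ring. Qed.

Lemma nsqB n (u v : 'cV[R]_n) : nsq (u - v) = nsq u - 2 * dot u v + nsq v.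
Proof. rewrite /nsq !dotBl !dotBr (dotC v u); ring. Qed.

Lemma CS n (u v : 'cV[R]_n) : dot u v ^+ 2 <= nsq u * nsq v.
Proof.
have [h0|hpos] := eqVneq (nsq v) 0.
  by rewrite (nsq_eq0 h0) dot0r nsq0 mulr0 expr0n.
have hv : 0 < nsq v by rewrite lt_def hpos nsq_ge0.
pose t := dot u v / nsq v.
have := nsq_ge0 (u - t *: v).
rewrite nsqB nsqZ dotZr /t => h.
have e : nsq u - 2 * (dot u v / nsq v * dot u v) + (dot u v / nsq v) ^+ 2 * nsq v
   = nsq u - dot u v ^+ 2 / nsq v by field; rewrite hpos.
rewrite e subr_ge0 ler_pdivrMr // in h.
Qed.

End Aux.


Section Aux2.
Variable R : realType.

Definition isproj n (P : 'M[R]_n) := P^T = P /\ P *m P = P.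

Lemma isprojC n (P : 'M[R]_n) : isproj P -> isproj (1%:M - P).
Proof.
move=> [hT hP]; split; first by rewrite linearB /= trmx1 hT.
by rewrite mulmxBl !mulmxBr !mul1mx !mulmx1 hP subrr subr0.
Qed.

Lemma proj_dot n (P : 'M[R]_n) (u v : 'cV[R]_n) : isproj P -> dot (P *m u) v = dot u (P *m v).
Proof. by move=> [hT _]; rewrite dotM hT dotC. Qed.

Lemma nsq_mul n m (B : 'M[R]_(m, n)) (v : 'cV[R]_n) : nsq (B *m v) = dot v (B^T *m B *m v).
Proof. by rewrite /nsq dotM dotC mulmxA. Qed.

Lemma nsq_orth n (Q : 'M[R]_(n, n)) (v : 'cV[R]_n) : Q^T *m Q = 1%:M -> nsq (Q *m v) = nsq v.
Proof. by move=> h; rewrite nsq_mul h mul1mx. Qed.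

Lemma proj_split n (P : 'M[R]_n) (x : 'cV[R]_n) : isproj P ->
  nsq x = nsq (P *m x) + nsq (x - P *m x).
Proof.
move=> hP; have [hT hPP] := hP.
have {1}-> : x = P *m x + (x - P *m x) by rewrite addrC subrK.
rewrite (nsqD (P *m x)).
have -> : dot (P *m x) (x - P *m x) = 0.
  by rewrite proj_dot // mulmxBr mulmxA hPP subrr dot0r.
by rewrite mulr0 addr0.
Qed.

Lemma proj_le n (P : 'M[R]_n) (x : 'cV[R]_n) : isproj P -> nsq (P *m x) <= nsq x.
Proof. by move=> hP; rewrite [leRHS](proj_split _ hP) lerDl nsq_ge0. Qed.

Lemma projC_mul n (P : 'M[R]_n) (x : 'cV[R]_n) : (1%:M - P) *m x = x - P *m x.
Proof. by rewrite mulmxBl mul1mx. Qed.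

Lemma proj_dotself n (P : 'M[R]_n) (x : 'cV[R]_n) : isproj P -> dot x (P *m x) = nsq (P *m x).
Proof. by move=> hP; rewrite /nsq proj_dot // mulmxA hP.2. Qed.

Lemma tr_bound m n (B : 'M[R]_(m, n)) c : 0 <= c ->
  (forall y, nsq (B *m y) <= c ^+ 2 * nsq y) ->
  forall v, nsq (B^T *m v) <= c ^+ 2 * nsq v.
Proof.
move=> hc H v.
set N := nsq (B^T *m v).
have h1 : N ^+ 2 <= nsq v * (c ^+ 2 * N).
  have -> : N = dot v (B *m (B^T *m v)) by rewrite dotM.
  apply: (le_trans (CS _ _)); apply: ler_wpM2l; first exact: nsq_ge0.
  by rewrite dotM -/N; apply: H.
have hN := nsq_ge0 (B^T *m v).
have hv := nsq_ge0 v.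
have hc2 : 0 <= c ^+ 2 by apply: sqr_ge0.
have [->|hN0] := eqVneq N 0; first by rewrite mulr_ge0.
have hNp : 0 < N by rewrite lt_def hN0 hN.
rewrite -(ler_pM2r hNp); rewrite expr2 in h1.
by apply: (le_trans h1); rewrite mulrCA mulrA.
Qed.

Lemma frob_bound m n (B : 'M[R]_(m, n)) (v : 'cV[R]_n) :
  nsq (B *m v) <= (\sum_i nsq (row i B)^T) * nsq v.
Proof.
rewrite nsqE mulr_suml; apply: ler_sum => i _.
have -> : (B *m v) i 0 = dot (row i B)^T v.
  by rewrite dotE mxE; apply: eq_bigr => j _; rewrite !mxE.
exact: CS.
Qed.

Lemma l2normE n (v : 'cV[R]_n) : l2norm v = Num.sqrt (nsq v).
Proof. by rewrite /l2norm nsqE. Qed.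

Definition specset m n (B : 'M[R]_(m, n)) : set R :=
  [set l2norm (B *m v) | v in [set v : 'cV[R]_n | l2norm v = 1]].

Lemma specset_ub m n (B : 'M[R]_(m, n)) : has_ubound (specset B).
Proof.
exists (Num.sqrt (\sum_i nsq (row i B)^T)) => _ [v /= hv <-].
rewrite l2normE ler_sqrt; last by apply: sumr_ge0 => i _; apply: nsq_ge0.
have h1 : nsq v = 1.
  by move: hv; rewrite l2normE => /(congr1 (fun x => x ^+ 2)); rewrite sqr_sqrtr ?nsq_ge0 // expr1n.
by have := frob_bound B v; rewrite h1 mulr1.
Qed.

Lemma specnorm_ub m n (B : 'M[R]_(m, n)) (v : 'cV[R]_n) :
  nsq (B *m v) <= specnorm B ^+ 2 * nsq v.
Proof.
have [h0|hpos] := eqVneq (nsq v) 0.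
  by rewrite (nsq_eq0 h0) mulmx0 !nsq0 mulr0.
have hv : 0 < nsq v by rewrite lt_def hpos nsq_ge0.
set a := Num.sqrt (nsq v).
have ha : 0 < a by rewrite sqrtr_gt0.
have ha2 : a ^+ 2 = nsq v by rewrite sqr_sqrtr // nsq_ge0.
pose u := a^-1 *: v.
have hu : l2norm u = 1.
  rewrite l2normE /u nsqZ exprVn ha2 mulVf ?sqrtr1 //.
have hin : specset B (l2norm (B *m u)) by exists u.
have hle := ub_le_sup (specset_ub B) hin.
have hge : 0 <= l2norm (B *m u) by rewrite l2normE sqrtr_ge0.
have : l2norm (B *m u) ^+ 2 <= specnorm B ^+ 2.
  by rewrite ler_sqr // ?nng_num //; apply: le_trans hle.
rewrite l2normE sqr_sqrtr ?nsq_ge0 // /u -scalemxAr nsqZ exprVn ha2.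
by rewrite ler_pdivrMl // mulrC.
Qed.

Lemma specnorm_ge0 m n (B : 'M[R]_(m, n)) : (0 < n)%N -> 0 <= specnorm B.
Proof.
move=> hn.
pose v : 'cV[R]_n := delta_mx (Ordinal hn) 0.
have hv : l2norm v = 1.
  rewrite l2normE nsqE (bigD1 (Ordinal hn)) //= big1 ?addr0.
    by rewrite !mxE !eqxx expr1n sqrtr1.
  by move=> i hi; rewrite mxE (negbTE hi) expr0n.
have hin : specset B (l2norm (B *m v)) by exists v.
apply: le_trans (ub_le_sup (specset_ub B) hin).
by rewrite l2normE sqrtr_ge0.
Qed.

Lemma specnorm_le m n (B : 'M[R]_(m, n)) c : (0 < n)%N -> 0 <= c ->
  (forall v, nsq (B *m v) <= c ^+ 2 * nsq v) -> specnorm B <= c.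
Proof.
move=> hn hc H.
apply: ge_sup.
  exists (l2norm (B *m delta_mx (Ordinal hn) 0)).
  exists (delta_mx (Ordinal hn) 0) => //=.
  rewrite l2normE nsqE (bigD1 (Ordinal hn)) //= big1 ?addr0.
    by rewrite !mxE !eqxx expr1n sqrtr1.
  by move=> i hi; rewrite mxE (negbTE hi) expr0n.
move=> _ [v /= hv <-].
have h1 : nsq v = 1.
  by move: hv; rewrite l2normE => /(congr1 (fun x => x ^+ 2)); rewrite sqr_sqrtr ?nsq_ge0 // expr1n.
rewrite l2normE -(ger0_norm hc) -sqrtr_sqr ler_sqrt ?sqr_ge0 //.
by have := H v; rewrite h1 mulr1.
Qed.

End Aux2.


Section Aux3.
Variable R : realType.

Lemma proj_combine n (P Q : 'M[R]_n) c : isproj P -> isproj Q ->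
  (forall w, nsq ((1%:M - P) *m (Q *m w)) <= c ^+ 2 * nsq w) ->
  (forall w, nsq (P *m ((1%:M - Q) *m w)) <= c ^+ 2 * nsq w) ->
  forall v, nsq ((P - Q) *m v) <= c ^+ 2 * nsq v.
Proof.
move=> hP hQ H1 H2 v.
have hPC := isprojC hP; have hQC := isprojC hQ.
set a := P *m ((1%:M - Q) *m v); set b := (1%:M - P) *m (Q *m v).
have -> : (P - Q) *m v = a - b.
  rewrite /a /b !projC_mul mulmxBr mulmxBl mulmxA.
  by rewrite opprB addrA subrK.
have hab : dot a b = 0.
  by rewrite /a /b proj_dot // mulmxA mulmxBr mulmx1 hP.2 subrr mul0mx dot0r.
rewrite nsqB hab mulr0 subr0.
have ha : nsq a <= c ^+ 2 * nsq ((1%:M - Q) *m v).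
  by rewrite /a -{1}hQC.2 -mulmxA; apply: H2.
have hb : nsq b <= c ^+ 2 * nsq (Q *m v).
  by rewrite /b -{1}hQ.2 -mulmxA; apply: H1.
have hs := proj_split v hQ.
rewrite projC_mul in ha.
rewrite hs mulrDr addrC.
by apply: lerD.
Qed.

Lemma rank_mul_triv m n p (Y : 'M[R]_(m, n)) (Z : 'M[R]_(n, p)) :
  (forall b : 'rV[R]_n, (b <= Y)%MS -> b *m Z = 0 -> b = 0) ->
  \rank (Y *m Z) = \rank Y.
Proof.
move=> H; rewrite -[RHS](mxrank_mul_ker Y Z).
suff -> : (Y :&: kermx Z)%MS = 0 by rewrite mxrank0 addn0.
apply/row_matrixP => i; rewrite row0; apply: H.
  exact: submx_trans (row_sub i _) (capmxSl _ _).
by apply/sub_kermxP; exact: submx_trans (row_sub i _) (capmxSr _ _).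
Qed.

Lemma proj_fix_row n m (P : 'M[R]_n) (X : 'M[R]_(m, n)) : isproj P ->
  (X <= P)%MS -> X *m P = X.
Proof. by move=> hP /submxP [D ->]; rewrite -mulmxA hP.2. Qed.

Lemma proj_swap n (P Q : 'M[R]_n) c : isproj P -> isproj Q ->
  \rank P = \rank Q -> 0 <= c ->
  (forall w, nsq ((1%:M - P) *m (Q *m w)) <= c ^+ 2 * nsq w) ->
  forall v, nsq (P *m ((1%:M - Q) *m v)) <= c ^+ 2 * nsq v.
Proof.
move=> hP hQ hrk hc H.
have hc2 : 0 <= c ^+ 2 by apply: sqr_ge0.
suff H' : forall y, nsq ((1%:M - Q) *m P *m y) <= c ^+ 2 * nsq y.
  move=> v; have := tr_bound hc H' v.
  by rewrite trmx_mul hP.1 (isprojC hQ).1 mulmxA.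
move=> y; rewrite -mulmxA; set y' := P *m y.
have hy' : nsq y' <= nsq y by apply: proj_le.
have [c1|c1] := leP 1 c.
  have hc1 : 1 <= c ^+ 2 by rewrite -(expr1n _ 2) ler_sqr // ?nnegrE // (le_trans ler01 c1).
  apply: le_trans (proj_le _ (isprojC hQ)) _.
  apply: le_trans hy' _.
  by rewrite -{1}(mul1r (nsq y)) ler_wpM2r // nsq_ge0.
have hc21 : c ^+ 2 < 1 by rewrite -(expr1n _ 2) ltr_pXn2r // ?nnegrE.
apply: le_trans (ler_wpM2l hc2 hy'); rewrite projC_mul.
have hrQP : \rank (Q *m P) = \rank Q.
  apply: rank_mul_triv => b hb hbP.
  have hbQ : b *m Q = b by apply: proj_fix_row.
  pose w := b^T.
  have hQw : Q *m w = w by rewrite /w -hQ.1 -trmx_mul hbQ.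
  have hPw : P *m w = 0 by rewrite /w -hP.1 -trmx_mul hbP trmx0.
  have := H w; rewrite hQw projC_mul hPw subr0 => hw.
  have hw0 : nsq w = 0.
    apply/eqP; rewrite eq_le nsq_ge0 andbT.
    have := nsq_ge0 w; nra.
  have := nsq_eq0 hw0; rewrite /w => /(congr1 trmx); by rewrite trmxK trmx0.
have hsub : (Q *m P <= P)%MS by apply: submxMl.
have hPQP : (P <= Q *m P)%MS.
  by rewrite -(mxrank_leqif_sup hsub).2 hrQP hrk eqxx.
have hy'P : (y'^T <= P)%MS by rewrite /y' trmx_mul hP.1 submxMl.
have [z hz] := submxP (submx_trans hy'P hPQP).
pose x := (z *m Q)^T.
have hQx : Q *m x = x by rewrite /x trmx_mul hQ.1 mulmxA hQ.2.
have hPx : P *m x = y'.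
  by rewrite /x trmx_mul -{1}hP.1 mulmxA -trmx_mul -trmx_mul -hz trmxK.
have e1 : nsq y' = dot (Q *m y') x.
  by rewrite (proj_dot _ _ hQ) hQx -hPx /nsq !(proj_dot _ _ hP) mulmxA hP.2.
have hCS := CS (Q *m y') x.
have hx := H x; rewrite hQx projC_mul hPx in hx.
have hsx := proj_split x hP; rewrite hPx in hsx.
have hsy := proj_split y' hQ.
set a := nsq y' in e1 hsx hsy *; set q := nsq (Q *m y') in hCS hsy *.
set X := nsq x in hCS hx hsx; set e := nsq (y' - Q *m y') in hsy *.
set f := nsq (x - y') in hx hsx.
rewrite -e1 in hCS.
have ha : 0 <= a := nsq_ge0 _. have hq : 0 <= q := nsq_ge0 _.
have hX : 0 <= X := nsq_ge0 _. have he : 0 <= e := nsq_ge0 _.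
have hf : 0 <= f := nsq_ge0 _.
have h1 : (1 - c ^+ 2) * X <= a.
  rewrite mulrBl mul1r; lra.
have h2 : (1 - c ^+ 2) * a ^+ 2 <= q * a.
  apply: le_trans (ler_wpM2l _ hCS) _; first lra.
  rewrite mulrCA; apply: ler_wpM2l => //.
have [a0|apos] := eqVneq a 0.
  by move: hsy; rewrite a0 => hsy; lra.
have hap : 0 < a by rewrite lt_def apos ha.
have h3 : (1 - c ^+ 2) * a <= q.
  by rewrite -(ler_pM2r hap) -mulrA -expr2.
lra.
Qed.

End Aux3.


Section Aux4.
Variable R : realType.

Lemma gram_unit m n (B : 'M[R]_(m, n)) :
  (row_base B *m (row_base B)^T) \in unitmx.
Proof.
rewrite -row_free_unit /row_free.
rewrite rank_mul_triv; first by have := row_base_free B; rewrite /row_free.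
move=> b /submxP [D ->] h.
have h2 : nsq (D *m row_base B)^T = 0.
  by rewrite /nsq /dot trmxK trmx_mul mulmxA h mul0mx mxE.
have := nsq_eq0 h2 => /(congr1 trmx); by rewrite trmxK trmx0.
Qed.

Lemma rowproj_sym m n (B : 'M[R]_(m, n)) : (rowproj B)^T = rowproj B.
Proof.
rewrite /rowproj /=; move: (row_base B) => Bb.
by rewrite !trmx_mul trmxK trmx_inv trmx_mul trmxK mulmxA.
Qed.

Lemma rowproj_proj m n (B : 'M[R]_(m, n)) : isproj (rowproj B).
Proof.
split; first exact: rowproj_sym.
rewrite /rowproj /=; have hu := gram_unit B; move: (row_base B) hu => Bb hu.
rewrite -!mulmxA; congr (_ *m _).
by rewrite (mulmxA Bb) (mulmxA (invmx _) (Bb *m Bb^T)) mulVmx // mul1mx.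
Qed.

Lemma rowproj_fix m n p (B : 'M[R]_(m, n)) (X : 'M[R]_(p, n)) :
  (X <= B)%MS -> X *m rowproj B = X.
Proof.
move=> hX; have : (X <= row_base B)%MS by rewrite eq_row_base.
move=> /submxP [D ->]; rewrite /rowproj /=.
have hu := gram_unit B; move: (row_base B) hu => Bb hu.
by rewrite !mulmxA -(mulmxA D) -(mulmxA D) mulmxV // mulmx1.
Qed.

Lemma rowproj_sub m n (B : 'M[R]_(m, n)) : (rowproj B <= B)%MS.
Proof. by rewrite /rowproj /= -(eq_row_base B) submxMl. Qed.

Lemma rowproj_rank m n (B : 'M[R]_(m, n)) : \rank (rowproj B) = \rank B.
Proof.
apply/eqP; rewrite eqn_leq mxrankS ?rowproj_sub //=.
by rewrite -{1}(rowproj_fix (submx_refl B)) mxrankM_maxr.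
Qed.

Lemma rowproj_fixv m n (B : 'M[R]_(m, n)) (x : 'cV[R]_n) :
  (x^T <= B)%MS -> rowproj B *m x = x.
Proof.
move=> h; rewrite -[x]trmxK -{1}rowproj_sym -trmx_mul.
by rewrite rowproj_fix.
Qed.

Lemma proj_unique p n (W : 'M[R]_(p, n)) (P Q : 'M[R]_n) :
  P^T = P -> Q^T = Q -> (P <= W)%MS -> (Q <= W)%MS ->
  (forall X : 'M[R]_n, (X <= W)%MS -> X *m P = X) ->
  (forall X : 'M[R]_n, (X <= W)%MS -> X *m Q = X) -> P = Q.
Proof.
move=> hP hQ sP sQ fP fQ.
have e1 : Q *m P = Q by apply: fP.
have e2 : P *m Q = P by apply: fQ.
have : (Q *m P)^T = Q^T by rewrite e1.
by rewrite trmx_mul hP hQ e2.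
Qed.

End Aux4.


Section Aux5.
Variable R : realType.

Lemma sum_if m (a : nat) (F : nat -> R) :
  \sum_(t < m) (if val t == a then F (val t) else 0) = if (a < m)%N then F a else 0.
Proof.
case: ltnP => ha.
  rewrite (bigD1 (Ordinal ha)) //= eqxx big1 ?addr0 // => t ht.
  case: eqP => // e; case/eqP: ht; exact: val_inj.
by apply: big1 => t _; case: eqP => // e; have := ltn_ord t; rewrite /= in e; lia.
Qed.

Lemma diag_mulE a b c (s t : nat -> R) i j :
  (diagmx_of a b s *m diagmx_of b c t) i j =
  if (val i < b)%N then (if val i == val j then s (val i) * t (val i) else 0) else 0.
Proof.
rewrite mxE -(sum_if b (val i) (fun _ => if val i == val j then s (val i) * t (val i) else 0)).
apply: eq_bigr => k _; rewrite !mxE.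
case: (eqVneq (val k) (val i)) => e.
  by rewrite e; case: eqP => _; rewrite ?mulr0.
by rewrite mul0r.
Qed.

Lemma diag_tr a b (s : nat -> R) : (diagmx_of a b s)^T = diagmx_of b a s.
Proof.
apply/matrixP => i j; rewrite !mxE eq_sym.
by case: eqP => // ->.
Qed.

Lemma diag_vecE n (g : nat -> R) (y : 'cV[R]_n) i :
  (diagmx_of n n g *m y) i 0 = g (val i) * y i 0.
Proof.
have := sum_if n (val i) (fun _ => g (val i) * y i 0); rewrite ltn_ord => <-.
rewrite mxE; apply: eq_bigr => k _; rewrite !mxE.
case: (eqVneq (val k) (val i)) => e.
  by rewrite (val_inj e).
by rewrite mul0r.
Qed.

Lemma lcolsE m p r (U : 'M[R]_(m, p)) : lcols r U = U *m diagmx_of p r (fun _ => 1).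
Proof.
apply/matrixP => i j; rewrite !mxE big_mkcond /=.
apply: eq_bigr => k _; rewrite !mxE.
by case: eqP => _; rewrite ?mulr1 ?mulr0.
Qed.

Lemma sel_orth p r : (r <= p)%N ->
  (diagmx_of p r (fun _ => 1 : R))^T *m diagmx_of p r (fun _ => 1) = 1%:M.
Proof.
move=> hr; rewrite diag_tr; apply/matrixP => i j.
rewrite diag_mulE !mxE (leq_trans (ltn_ord i) hr) mulr1.
by case: eqP => [/val_inj -> | ne]; rewrite ?eqxx //; case: eqP => // e; case: ne; rewrite e.
Qed.

Lemma diag_eq a b (s t : nat -> R) :
  (forall i, (i < minn a b)%N -> s i = t i) -> diagmx_of a b s = diagmx_of a b t.
Proof.
move=> h; apply/matrixP => i j; rewrite !mxE.
case: eqP => // e; rewrite h // leq_min ltn_ord /= e ltn_ord //.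
Qed.

End Aux5.


Section PerK.
Variable R : realType.
Variables (d n : nat) (A E : 'M[R]_(d, n)) (U : 'M[R]_d) (s : nat -> R) (V : 'M[R]_n).
Hypothesis hsvd : is_svd (A + E) U s V.
Hypothesis hr : (1 <= \rank A)%N.
Hypothesis hpos : 0 < s (\rank A).-1.

Let r := \rank A.
Let Ut := trunc_U r U.
Let Vt := trunc_V r V.
Let St := trunc_S r s.
Let At := trunc_A r U s V.
Let Di := diagmx_of r r (fun i => (s i)^-1).
Let sig := s r.-1.

Lemma rd : (r <= d)%N. Proof. exact: rank_leq_row. Qed.
Lemma rn : (r <= n)%N. Proof. exact: rank_leq_col. Qed.

Lemma s_ge i : (i < r)%N -> sig <= s i.
Proof. move=> hi; case: hsvd => _ _ _ hs _; apply: hs; rewrite /r; lia. Qed.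

Lemma s_pos i : (i < r)%N -> 0 < s i.
Proof. by move=> hi; apply: lt_le_trans hpos (s_ge hi). Qed.

Lemma Vt_orth : Vt^T *m Vt = 1%:M.
Proof.
case: hsvd => _ hV _ _ _.
by rewrite /Vt /trunc_V lcolsE trmx_mul -mulmxA (mulmxA V^T) hV mul1mx sel_orth // rn.
Qed.

Lemma Ut_orth : Ut^T *m Ut = 1%:M.
Proof.
case: hsvd => hU _ _ _ _.
by rewrite /Ut /trunc_U lcolsE trmx_mul -mulmxA (mulmxA U^T) hU mul1mx sel_orth // rd.
Qed.

Lemma StDi : St *m Di = 1%:M.
Proof.
apply/matrixP => i j; rewrite diag_mulE ltn_ord !mxE.
case: eqP => [e|ne].
  rewrite (val_inj e) !eqxx mulfV //; apply: lt0r_neq0; exact: s_pos (ltn_ord _).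
by case: eqP => // e; case: ne; rewrite e.
Qed.

Lemma DiSt : Di *m St = 1%:M.
Proof. exact: mulmx1C StDi. Qed.

Lemma XtUt : (A + E)^T *m Ut = Vt *m St.
Proof.
case: hsvd => hU hV hX _ _.
rewrite hX /Ut /Vt /trunc_U /trunc_V /St /trunc_S !lcolsE !trmx_mul trmxK.
rewrite -!mulmxA (mulmxA U^T) hU mul1mx diag_tr; congr (_ *m _).
apply/matrixP => i j; rewrite !diag_mulE.
case: eqP => [e|ne]; last by do 2 case: ifP.
by rewrite e (leq_trans (ltn_ord j) rd) ltn_ord mulr1 mul1r.
Qed.

Lemma Vt_eq : Vt = (A + E)^T *m Ut *m Di.
Proof. by rewrite XtUt -mulmxA StDi mulmx1. Qed.

Lemma Vt_sub_At : (Vt^T <= At)%MS.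
Proof.
apply/submxP; exists (Di *m Ut^T).
rewrite /At /trunc_A -/Ut -/Vt -/St !mulmxA -(mulmxA Di) Ut_orth mulmx1 DiSt mul1mx //.
Qed.

Lemma At_sub_Vt : (At <= Vt^T)%MS.
Proof. by rewrite /At /trunc_A submxMl. Qed.

Lemma rowproj_At : rowproj At = Vt *m Vt^T.
Proof.
apply: (proj_unique (W := At)).
- exact: rowproj_sym.
- by rewrite trmx_mul trmxK.
- exact: rowproj_sub.
- exact: submx_trans (submxMl _ _) Vt_sub_At.
- by move=> X hX; apply: rowproj_fix.
- move=> X hX; have /submxP [D ->] := submx_trans hX At_sub_Vt.
  by rewrite mulmxA -(mulmxA D) Vt_orth mulmx1.
Qed.

Lemma rank_Vt : \rank Vt^T = r.
Proof.
apply/eqP; rewrite eqn_leq rank_leq_row /=.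
by rewrite -{1}(mxrank1 R r) -Vt_orth mxrankM_maxl.
Qed.

Lemma rank_At : \rank (rowproj At) = r.
Proof.
have e : \rank At = \rank Vt^T.
  by apply/eqP; rewrite eqn_leq !mxrankS ?At_sub_Vt ?Vt_sub_At.
by rewrite rowproj_rank e rank_Vt.
Qed.

Lemma At_proj : isproj (rowproj At).
Proof. exact: rowproj_proj. Qed.

Lemma nsq_Di (z : 'cV[R]_r) : nsq (Di *m z) <= sig^-1 ^+ 2 * nsq z.
Proof.
rewrite !nsqE mulr_sumr; apply: ler_sum => i _.
rewrite diag_vecE exprMn; apply: ler_wpM2r; first exact: sqr_ge0.
have hi := s_pos (ltn_ord i).
have hs : 0 < sig by [].
rewrite ler_sqr ?nnegrE ?invr_ge0; [|exact: ltW|exact: ltW].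
rewrite lef_pV2 ?posrE //; exact: s_ge (ltn_ord i).
Qed.

Let cc := specnorm (E^T *m Ut) / sig.

Lemma cc_ge0 : 0 <= cc.
Proof. by apply: divr_ge0; [apply: specnorm_ge0; move: hr; rewrite /r; lia | exact: ltW]. Qed.

Lemma H1 (w : 'cV[R]_n) :
  nsq ((1%:M - rowproj A) *m (rowproj At *m w)) <= cc ^+ 2 * nsq w.
Proof.
set P := rowproj A.
have hP : isproj P := rowproj_proj A.
have hPA : P *m A^T = A^T.
  by rewrite -hP.1 -trmx_mul rowproj_fix.
rewrite rowproj_At -mulmxA {1}Vt_eq.
set z := Vt^T *m w.
have h0 : (1%:M - P) *m A^T = 0 by rewrite mulmxBl mul1mx hPA subrr.
rewrite -!mulmxA; set Y := Ut *m (Di *m z).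
rewrite linearD /= (mulmxDl A^T E^T Y) (mulmxDr (1%:M - P)) (mulmxA (1%:M - P) A^T) h0 mul0mx add0r.
rewrite /Y (mulmxA E^T Ut).
apply: le_trans (proj_le _ (isprojC hP)) _.
apply: le_trans (specnorm_ub (E^T *m Ut) (Di *m z)) _.
have hz : nsq z <= nsq w.
  rewrite /z nsq_mul trmxK -rowproj_At proj_dotself //; first exact: proj_le At_proj.
  exact: At_proj.
have h2 := nsq_Di z.
have h3 : nsq (Di *m z) <= sig^-1 ^+ 2 * nsq w.
  apply: le_trans h2 _; apply: ler_wpM2l => //; exact: sqr_ge0.
apply: le_trans (ler_wpM2l (sqr_ge0 _) h3) _.
by rewrite /cc expr_div_n -exprVn mulrA.
Qed.

Lemma sin_le : sin_max_angle A At <= cc.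
Proof.
rewrite /sin_max_angle.
apply: specnorm_le; first by move: rn hr; rewrite /r; lia.
  exact: cc_ge0.
apply: proj_combine; [exact: rowproj_proj | exact: At_proj | exact: H1 |].
apply: proj_swap; [exact: rowproj_proj | exact: At_proj | | exact: cc_ge0 | exact: H1].
by rewrite rowproj_rank rank_At.
Qed.

Lemma low_k (x : 'cV[R]_n) : (x^T <= A)%MS ->
  (1 - sin_max_angle A At ^+ 2) * nsq x <= nsq (Vt^T *m x).
Proof.
move=> hx.
have e1 : nsq (Vt^T *m x) = nsq (rowproj At *m x).
  by rewrite nsq_mul trmxK -rowproj_At (proj_dotself x At_proj).
have e : x - rowproj At *m x = (rowproj A - rowproj At) *m x.
  by rewrite mulmxBl (rowproj_fixv hx).
have hs := proj_split x At_proj.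
rewrite e in hs.
have hb := specnorm_ub (rowproj A - rowproj At) x.
rewrite e1 mulrBl mul1r /sin_max_angle; lra.
Qed.

End PerK.


Section Upper.
Variable R : realType.

Lemma upper_M m n (M : 'M[R]_(m, n)) UM sM VM l (x : 'cV[R]_n) :
  is_svd M UM sM VM ->
  (forall t : 'I_n, (t < l)%N -> (VM^T *m x) t 0 = 0) ->
  nsq (M *m x) <= sM l ^+ 2 * nsq x.
Proof.
case=> hU hV hX hs hs0 hx.
have hVV : VM *m VM^T = 1%:M by apply: mulmx1C.
rewrite hX -!mulmxA nsq_orth //.
set y := VM^T *m x.
have hy : nsq y = nsq x by rewrite /y nsq_orth // trmxK.
rewrite -hy nsq_mul.
pose g := fun t : nat => if (t < m)%N then sM t * sM t else 0.
have -> : (diagmx_of m n sM)^T *m diagmx_of m n sM = diagmx_of n n g.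
  apply/matrixP => i j; rewrite diag_tr diag_mulE !mxE /g.
  by case: ifP => _; case: ifP.
rewrite dotE nsqE mulr_sumr; apply: ler_sum => i _.
rewrite diag_vecE /g.
have [hil|hil] := ltnP i l.
  by rewrite /y hx // !mulr0 ?mul0r ?expr0n ?mulr0.
have [h0 hsl] := hs0 i.
have hl := hs _ _ hil.
have [h1 _] := hs0 l.
case: ifP => _; last by rewrite mul0r mulr0 mulr_ge0 ?sqr_ge0.
have h2 : sM i * sM i <= sM l ^+ 2 by rewrite expr2; apply: ler_pM.
have -> : y i 0 * (sM i * sM i * y i 0) = (sM i * sM i) * y i 0 ^+ 2 by ring.
by apply: ler_wpM2r => //; apply: sqr_ge0.
Qed.

Lemma dot_sumr n I (r : seq I) (F : I -> 'M[R]_n) (x y : 'cV[R]_n) :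
  dot x ((\sum_(k <- r) F k) *m y) = \sum_(k <- r) dot x (F k *m y).
Proof.
by rewrite /dot mulmx_suml mulmx_sumr summxE.
Qed.

Lemma copid_zero n l (w : 'rV[R]_n) (t : 'I_n) : (t < l)%N ->
  (w *m copid_mx l) 0 t = 0.
Proof.
move=> ht; rewrite mxE; apply: big1 => u _; rewrite !mxE.
case: (eqVneq u t) => [->|ne]; first by rewrite eqxx ht subrr mulr0.
have ne' : (val u == val t) = false by apply/negbTE.
by rewrite ?ne' ?(negbTE ne) /= ?subrr ?mulr0.
Qed.

End Upper.


Unset Implicit Arguments.

Theorem lemma2 (R : realType) (K n : nat) (hK : (1 <= K)%N) (hn : (1 <= n)%N)
  (d : 'I_K -> nat) (A E : forall k : 'I_K, 'M[R]_(d k, n))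
  (hr : forall k, (1 <= \rank (A k))%N)
  (U : forall k : 'I_K, 'M[R]_(d k)) (s : 'I_K -> nat -> R)
  (V : 'I_K -> 'M[R]_n)
  (hsvd : forall k, is_svd (A k + E k) (U k) (s k) (V k))
  (hpos : forall k, 0 < s k (\rank (A k)).-1)
  (UM : 'M[R]_(\sum_(k < K) \rank (A k))) (sM : nat -> R) (VM : 'M[R]_n)
  (hsvdM : is_svd (mxcol (fun k => (trunc_V (\rank (A k)) (V k))^T)) UM sM VM) :
  forall i : nat, (1 <= i <= dim_cap_rows A)%N ->
    K%:R - \sum_(k < K) sin_max_angle (A k)
             (trunc_A (\rank (A k)) (U k) (s k) (V k)) ^+ 2 <= sM i.-1 ^+ 2 /\
    K%:R - \sum_(k < K)
       (Num.max (specnorm (E k *m trunc_V (\rank (A k)) (V k)))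
                (specnorm ((E k)^T *m trunc_U (\rank (A k)) (U k)))
        / s k (\rank (A k)).-1) ^+ 2
    <= K%:R - \sum_(k < K) sin_max_angle (A k)
             (trunc_A (\rank (A k)) (U k) (s k) (V k)) ^+ 2.
Proof.
move=> i /andP [hi1 hiJ].
split; last first.
  rewrite lerD2l lerN2; apply: ler_sum => k _.
  have hsig : 0 < s k (\rank (A k)).-1 := hpos k.
  have h0 : 0 <= sin_max_angle (A k) (trunc_A (\rank (A k)) (U k) (s k) (V k)).
    by apply: specnorm_ge0; lia.
  rewrite ler_sqr ?nnegrE //; last first.
    by apply: le_trans h0 _; apply: le_trans (sin_le (hsvd k) (hr k) (hpos k)) _;
       apply: ler_wpM2r; [rewrite invr_ge0 ltW | rewrite le_max lexx orbT].
  apply: le_trans (sin_le (hsvd k) (hr k) (hpos k)) _.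
  by apply: ler_wpM2r; [rewrite invr_ge0 ltW | rewrite le_max lexx orbT].
set c := K%:R - _.
pose M := mxcol (fun k => (trunc_V (\rank (A k)) (V k))^T).
rewrite /dim_cap_rows in hiJ.
set W := (\bigcap_(k < K) <<A k>>)%MS in hiJ.
have [_ hVV _ _ _] := hsvdM.
set l := i.-1.
pose Z := copid_mx l *m VM^T : 'M[R]_n.
have hWn := rank_leq_col W.
have hrZ : \rank Z = (n - l)%N.
  rewrite mxrankMfree ?rank_copid_mx //; first by rewrite /l; lia.
  rewrite /row_free; apply/eqP/eqP; rewrite eqn_leq rank_leq_row.
  by rewrite -{1}(mxrank1 R n) -hVV mxrankM_maxl.
have hcap : (0 < \rank (W :&: Z))%N.
  have := mxrank_sum_cap W Z; have := rank_leq_col (W + Z)%MS.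
  rewrite hrZ /l; lia.
have [j hj] : exists j, row j (W :&: Z)%MS != 0.
  case: (pickP (fun j => row j (W :&: Z)%MS != 0)) => [j hj|h]; first by exists j.
  have h0 : (W :&: Z)%MS = 0.
    by apply/row_matrixP => j; rewrite row0; apply/eqP; move: (h j) => /negbFE.
  by move: hcap; rewrite h0 mxrank0.
set b := row j (W :&: Z)%MS in hj.
have hbW : (b <= W)%MS := submx_trans (row_sub j _) (capmxSl _ _).
have hbZ : (b <= Z)%MS := submx_trans (row_sub j _) (capmxSr _ _).
set x := b^T.
have hxA : forall k, (x^T <= A k)%MS.
  move=> k; rewrite trmxK; move/sub_bigcapmxP: hbW => h.
  by rewrite -(genmxE (A k)); apply: h.
have hx0 : 0 < nsq x.
  rewrite lt_def nsq_ge0 andbT; apply/eqP => h.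
  move: hj; rewrite -[b]trmxK -/x (nsq_eq0 h) trmx0 eqxx //.
have hlow : c * nsq x <= nsq (M *m x).
  rewrite nsq_mul /M tr_mxcol mul_mxrow_mxcol dot_sumr.
  have ec : c = \sum_(k < K) (1 - sin_max_angle (A k)
             (trunc_A (\rank (A k)) (U k) (s k) (V k)) ^+ 2).
    by rewrite /c sumrB sumr_const card_ord.
  rewrite ec mulr_suml; apply: ler_sum => k _.
  rewrite -nsq_mul; have := low_k (hsvd k) (hr k) (hpos k) (hxA k); exact.
have hup : nsq (M *m x) <= sM l ^+ 2 * nsq x.
  apply: upper_M hsvdM _ => t ht.
  have [w hw] := submxP hbZ.
  have -> : VM^T *m x = (b *m VM)^T by rewrite /x trmx_mul.
  rewrite hw /Z -!mulmxA hVV mulmx1 mxE.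
  exact: copid_zero.
by rewrite -(ler_pM2r hx0); exact: le_trans hlow hup.
Qed.
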